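(* For every ordered forest $\mathcal F$ let $S'^{\mathcal F}(A')$ be the sum of all $\mathcal F$-compatible words over $A'$ (in the sense below). Then for all ordered forests $\mathcal F,\mathcal G$, $S'^{\mathcal F}S'^{\mathcal G}=S'^{\mathcal F\mathcal G}$, and, letting letters of $A'$ commute with letters of $B'$, $$S'^{\mathcal F}(A'\oplus B')=\sum_{V}S'^{\mathrm{Roo}_V\mathcal F}(A')\,S'^{\mathrm{Lea}_V\mathcal F}(B'),$$ the sum over admissible cuts $V$ of $\mathcal F$. Hence $\mathcal F\mapsto S'^{\mathcal F}$ is compatible with the product and coproduct of $\mathbf H_o$.
   Context: An ordered forest on $n$ vertices ($n\ge 0$) is a rooted forest whose vertex set is $[n]=\{1,\dots,n\}$ with its natural total order (the labels need not be related to the tree structure); it is determined by its set of roots and the parent map $p$ on non-root vertices. A vertex $w$ is a descendant of $v$ if $v$ is obtained from $w$ by applying $p$ at least once. For $I\subseteq[n]$ with $|I|=k$, the restriction $\mathcal F_{|I}$ is the ordered forest on $[k]$ obtained by keeping the vertices in $I$ and the edges of $\mathcal F$ between two vertices of $I$ (a vertex of $I$ whose parent is not in $I$ becomes a root), relabelled via the unique increasing bijection $I\to[k]$. An admissible cut of $\mathcal F$ is a subset $V\subseteq[n]$ (possibly empty) containing no two distinct vertices one of which is a descendant of the other. For such $V$, let $L_V$ be the set of vertices lying in $V$ or descending from an element of $V$, and set $\mathrm{Lea}_V\mathcal F=\mathcal F_{|L_V}$, $\mathrm{Roo}_V\mathcal F=\mathcal F_{|[n]\setminus L_V}$. For ordered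 forests $\mathcal F$ on $[n]$ and $\mathcal G$ on $[m]$, $\mathcal F\mathcal G$ is the ordered forest on $[n+m]$ which is the disjoint union of $\mathcal F$ and of $\mathcal G$ with labels shifted by $n$. $\mathbf H_o$ is the vector space with basis the ordered forests, product extending $\mathcal F\mathcal G$, coproduct $\Delta(\mathcal F)=\sum_{V}\mathrm{Roo}_V\mathcal F\otimes\mathrm{Lea}_V\mathcal F$. Second realization: $A'=\{a_{ij}: 1\le i\le j\}$ with relation $a_{hi}\prec a_{ij}$ whenever $h\le i<j$ (and no other relations). A word $w=w_1\cdots w_n$ over $A'$ is $\mathcal F$-compatible if (a) for each root $k$ of $\mathcal F$, $w_k$ is a diagonal letter $a_{ii}$ for some $i$, and (b) $w_k\prec w_l$ whenever $k$ is the parent of $l$. With $B'=\{b_{ij}:1\le i\le j\}$ a disjoint copy of $A'$, $A'\oplus B'$ is the disjoint union with the relations of $A'$ and of $B'$, together with $a\prec b_{ii}$ for all $a\in A'$ and all $i\ge1$; $\mathcal F$-compatible words over $A'\oplus B'$ are defined by (a) (diagonal letters $a_{ii}$ or $b_{ii}$ at roots) and (b) with this extended relation. *)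

(* Defs.v *)
From mathcomp Require Import all_boot.
Set Implicit Arguments. Unset Strict Implicit. Unset Printing Implicit Defensive.

(* An ordered forest on n vertices; vertices are 0..n-1 (0-based version of
   [n] with its natural order); fpar v = None means v is a root. *)
Record oforest := OForest { fsize : nat; fpar : nat -> option nat }.

Definition fstep (F : oforest) (o : option nat) : option nat := obind (fpar F) o.

Definition desc (F : oforest) (w v : nat) : bool :=
  has (fun k => iter k (fstep F) (Some w) == Some v) (iota 1 (fsize F)).

Definition is_forest (F : oforest) : Prop :=
  (forall v u, v < fsize F -> fpar F v = Some u -> u < fsize F) /\
  (forall v, v < fsize F -> ~~ desc F v v).

(* restriction F_{|I}, relabelled by the increasing bijection I -> [k] *)
Definition restrict (F : oforest) (I : nat -> bool) : oforest :=
  let s := [seq v <- iota 0 (fsize F) | I v] in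
  OForest (size s)
    (fun r => match fpar F (nth 0 s r) with
              | Some u => if u \in s then Some (index u s) else None
              | None => None end).

(* the product F G (disjoint union, G shifted by n) *)
Definition fcat (F G : oforest) : oforest :=
  OForest (fsize F + fsize G)
    (fun v => if v < fsize F then fpar F v
              else omap (addn (fsize F)) (fpar G (v - fsize F))).

Definition admissible (F : oforest) (V : {set 'I_(fsize F)}) : bool :=
  [forall x in V, forall y in V, (x != y) ==> ~~ desc F (val x) (val y)].

Definition inL (F : oforest) (V : {set 'I_(fsize F)}) (w : nat) : bool :=
  [exists x in V, (w == val x) || desc F w (val x)].

Definition Roo (F : oforest) (V : {set 'I_(fsize F)}) : oforest :=
  restrict F (fun w => ~~ inL V w).
Definition Lea (F : oforest) (V : {set 'I_(fsize F)}) : oforest :=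
  restrict F (fun w => inL V w).

(* letters a_ij of A' encoded as (i,j), with 1 <= i <= j *)
Definition letter := (nat * nat)%type.
Definition validA (x : letter) : bool := 0 < x.1 <= x.2.
Definition diagA (x : letter) : bool := x.1 == x.2.
Definition precA (x y : letter) : bool := (x.2 == y.1) && (x.1 <= x.2 < y.2).

(* letters of A' (+) B': (false, l) is a_l, (true, l) is b_l *)
Definition letterAB := (bool * letter)%type.
Definition validAB (x : letterAB) : bool := validA x.2.
Definition diagAB (x : letterAB) : bool := diagA x.2.
Definition precAB (x y : letterAB) : bool :=
  if x.1 == y.1 then precA x.2 y.2 else (~~ x.1) && y.1 && diagA y.2.

Definition compat_gen (L : Type) (x0 : L) (valid diag : L -> bool)
  (prec : L -> L -> bool) (F : oforest) (w : seq L) : bool :=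
  [&& size w == fsize F, all valid w &
   all (fun k => match fpar F k with
                 | None => diag (nth x0 w k)
                 | Some l => prec (nth x0 w l) (nth x0 w k) end)
       (iota 0 (fsize F))].

Definition compatA F w := compat_gen (0, 0) validA diagA precA F w.
Definition compatAB F w := compat_gen (false, (0, 0)) validAB diagAB precAB F w.

(* formal series with nat coefficients: coefficient functions on words.
   S'^F(A') : coefficient 1 on F-compatible words, 0 elsewhere. *)
Definition SA (F : oforest) (w : seq letter) : nat := compatA F w.
Definition SAB (F : oforest) (w : seq letterAB) : nat := compatAB F w.

Definition prod_ser (S T : seq letter -> nat) (w : seq letter) : nat :=
  \sum_(k < (size w).+1) S (take k w) * T (drop k w).

(* commutation of A'-letters with B'-letters: the quotient monoid is
   A'^* x B'^*, a word w maps to (projA w, projB w). *)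
Definition projA (w : seq letterAB) : seq letter := [seq x.2 | x <- w & ~~ x.1].
Definition projB (w : seq letterAB) : seq letter := [seq x.2 | x <- w & x.1].

Fixpoint shuffle (m : seq bool) (u v : seq letter) : seq letterAB :=
  match m with
  | [::] => [::]
  | b :: m' => if b then match v with
                         | y :: v' => (true, y) :: shuffle m' u v'
                         | [::] => [::] end
               else match u with
                    | x :: u' => (false, x) :: shuffle m' u' v
                    | [::] => [::] end
  end.

Fixpoint allmasks (N : nat) : seq (seq bool) :=
  match N with
  | 0 => [:: [::]]
  | N'.+1 => [seq b :: m | b <- [:: false; true], m <- allmasks N']
  end.

(* coefficient of the class (u,v) in the image of S'^F(A'(+)B'):
   sum over all words w over A'(+)B' with projA w = u and projB w = v
   (these are exactly the shuffles of u and v, each obtained once). *)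
Definition imageAB (F : oforest) (u v : seq letter) : nat :=
  \sum_(m <- allmasks (size u + size v) |
        (projA (shuffle m u v) == u) && (projB (shuffle m u v) == v))
     SAB F (shuffle m u v).

(* Main.v *)
Require Import Defs.
From mathcomp Require Import all_boot.
Set Implicit Arguments. Unset Strict Implicit.

Lemma part1 (F G : oforest) (hF : is_forest F) (w : seq letter) :
  prod_ser (SA F) (SA G) w = SA (fcat F G) w.
Proof.
rewrite /prod_ser /SA.
have [le|lt] := leqP (fsize F) (size w); last first.
  rewrite big1; last first.
    move=> k _; rewrite /compatA /compat_gen size_take.
    case: ifP => _; first by rewrite (ltn_eqF (leq_trans (ltn_ord k) _)) //.
    by rewrite (ltn_eqF lt).
  rewrite /compatA /compat_gen /= eqn_leq (leqNgt (fsize F + _)) (leq_trans lt (leq_addr _ _)) ?andbF //.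
have ho : fsize F < (size w).+1 by [].
rewrite (bigD1 (Ordinal ho)) //= big1 ?addn0; last first.
  move=> k /eqP nk; rewrite /compatA /compat_gen size_take.
  case: ifP => hk.
    by rewrite (_ : (k == fsize F :> nat) = false) //; apply/eqP => e; apply: nk; apply: val_inj.
  have : k = size w :> nat by apply/eqP; rewrite eqn_leq -ltnS ltn_ord leqNgt hk.
  move=> e; rewrite e (_ : (size w == fsize F) = false) //.
  apply/negbTE; apply/negP=> /eqP e2; apply: nk; apply: val_inj => /=; by rewrite e e2.
rewrite mulnb /compatA /compat_gen /= size_take size_drop.
have -> : (if fsize F < size w then fsize F else size w) = fsize F.
  by case: ifP => // /negbT; rewrite -leqNgt => h; apply/eqP; rewrite eqn_leq h le.
rewrite eqxx /=.
have -> : (size w - fsize F == fsize G) = (size w == fsize F + fsize G).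
  by apply/eqP/eqP => [<-|->]; [rewrite subnKC | rewrite addKn].
have E1 : all validA w = all validA (take (fsize F) w) && all validA (drop (fsize F) w).
  by rewrite -all_cat cat_take_drop.
rewrite E1 iotaD add0n.
have -> : iota (fsize F) (fsize G) = map (addn (fsize F)) (iota 0 (fsize G)) by rewrite -iotaDl addn0.
rewrite all_cat all_map.
set a1 := all _ (iota 0 (fsize F)).
set a2 := all _ (iota 0 (fsize G)).
set b1 := all _ (iota 0 (fsize F)).
set b2 := all _ (iota 0 (fsize G)).
have -> : b1 = a1.
  apply: eq_in_all => i; rewrite mem_iota /= add0n => hi.
  rewrite hi; case e: (fpar F i) => [l|]; last by rewrite nth_take.
  have hl := hF.1 _ _ hi e.
  by rewrite !nth_take.
have -> : b2 = a2.
  apply: eq_in_all => j; rewrite mem_iota /= add0n => hj.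
  rewrite /= ltnNge leq_addr /= addKn.
  by case: (fpar G j) => [l|] /=; rewrite !nth_drop.
by case: a1; case: a2; case: (all validA (take _ _)); case: (all validA (drop _ _)); case: (size w == _).
Qed.


Lemma iterNone (F : oforest) j : iter j (fstep F) None = None.
Proof. by elim: j => //= j ->. Qed.

Lemma iterNone_le (F : oforest) x i j : iter i (fstep F) x = None -> i <= j ->
  iter j (fstep F) x = None.
Proof. by move=> h /subnK <-; rewrite iterD h iterNone. Qed.

Lemma iter_lt (F : oforest) (hF : is_forest F) j w v : w < fsize F ->
  iter j (fstep F) (Some w) = Some v -> v < fsize F.
Proof.
move=> hw; elim: j v => [|j IH] v /=; first by case=> <-.
case e: (iter j (fstep F) (Some w)) => [y|] //= hy.
exact: hF.1 _ _ (IH _ e) hy.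
Qed.

Lemma noloop (F : oforest) (hF : is_forest F) w : w < fsize F ->
  iter (fsize F).+1 (fstep F) (Some w) = None.
Proof.
move=> hw; set n := fsize F.
case e: (iter n.+1 (fstep F) (Some w)) => [z|] //; exfalso.
have hS : forall i, i <= n.+1 -> exists y, iter i (fstep F) (Some w) = Some y.
  move=> i hi; case e2: (iter i (fstep F) (Some w)) => [y|]; first by exists y.
  by rewrite (iterNone_le e2 hi) in e.
pose g i := odflt 0 (iter i (fstep F) (Some w)).
have hg : forall i, i <= n.+1 -> iter i (fstep F) (Some w) = Some (g i).
  by move=> i /hS [y hy]; rewrite /g hy.
pose s := map g (iota 0 n.+1).
have : ~~ uniq s.
  apply/negP => u; have := @uniq_leq_size _ s (iota 0 n)u.
  rewrite size_map !size_iota ltnn => h; suff: false by []; apply: h => x /mapP [i]; rewrite mem_iota /= add0n => hi ->.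
  by rewrite mem_iota /= add0n; apply: (iter_lt hF hw); apply: hg; apply: ltnW.
case/(uniqPn 0) => i [j [hij hj]]; rewrite size_map size_iota in hj.
rewrite !(nth_map 0) ?size_iota ?(ltn_trans hij) // !nth_iota ?(ltn_trans hij) // !add0n => eg.
have hgi : g i < n by apply: (iter_lt hF hw (j := i)); apply: hg; apply: ltnW; apply: ltn_trans hij hj.
have := hF.2 _ hgi; rewrite /desc; case/hasP; exists (j - i).
  rewrite mem_iota subn_gt0 hij /= add1n ltnS.
  by apply: leq_trans (leq_subr _ _) _; rewrite -ltnS.
rewrite -{1}hg; last by apply: ltnW; apply: ltn_trans hij hj.
by rewrite -iterD subnK ?(ltnW hij) // hg ?eg // ltnW.
Qed.

Lemma descE (F : oforest) (hF : is_forest F) w v : w < fsize F ->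
  desc F w v <-> exists j, 0 < j /\ iter j (fstep F) (Some w) = Some v.
Proof.
move=> hw; split.
  by case/hasP => k; rewrite mem_iota => /andP [k1 _] /eqP e; exists k.
case=> j [j0 e]; apply/hasP; exists j => //; last by rewrite e.
rewrite mem_iota j0 /= add1n ltnS leqNgt; apply/negP => hj.
by rewrite (iterNone_le (noloop hF hw) hj) in e.
Qed.

Definition closedP (F : oforest) (T : nat -> bool) :=
  forall k l, k < fsize F -> fpar F k = Some l -> T l -> T k.

Definition roots (F : oforest) (T : nat -> bool) : {set 'I_(fsize F)} :=
  [set x : 'I_(fsize F) | T (val x) &&
     (if fpar F (val x) is Some l then ~~ T l else true)].

Lemma reach_closed (F : oforest) (hF : is_forest F) T j w y :
  closedP F T -> w < fsize F -> iter j (fstep F) (Some w) = Some y -> T y -> T w.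
Proof.
move=> hT; elim: j w => [|j IH] w hw /=; first by case=> ->.
rewrite -/(iter j.+1 _ _) iterSr /= .
case e: (fpar F w) => [l|]; last by rewrite iterNone.
move=> /(IH _ (hF.1 _ _ hw e)) h /h; exact: hT hw e.
Qed.

Lemma step_desc (F : oforest) (hF : is_forest F) i l x : i < fsize F ->
  fpar F i = Some l -> (l == x) || desc F l x -> desc F i x.
Proof.
move=> hi e /orP [/eqP <-|].
  by apply/(descE hF _ hi); exists 1.
have hl := hF.1 _ _ hi e.
case/(descE hF _ hl) => j [j0 ej]; apply/(descE hF _ hi); exists j.+1.
by split => //; rewrite iterSr /= e.
Qed.

Lemma desc_inv (F : oforest) (hF : is_forest F) i x : i < fsize F ->
  desc F i x -> exists2 l, fpar F i = Some l & (l == x) || desc F l x.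
Proof.
move=> hi /(descE hF _ hi) [[|j] [] //] _; rewrite iterSr /=.
case e: (fpar F i) => [l|]; last by rewrite iterNone.
exists l => //; move: b; case: j => [|j] /=; first by case=> ->; rewrite eqxx.
move=> ej; apply/orP; right; apply/(descE hF _ (hF.1 _ _ hi e)).
by exists j.+1.
Qed.

Lemma inL_closed (F : oforest) (hF : is_forest F) (V : {set 'I_(fsize F)}) :
  closedP F (inL V).
Proof.
move=> k l hk e /existsP [x /andP [xV h]]; apply/existsP; exists x.
by rewrite xV /=; apply/orP; right; exact: step_desc hk e h.
Qed.

Lemma adm_roots (F : oforest) (hF : is_forest F) T :
  closedP F T -> admissible (roots F T).
Proof.
move=> hT; apply/forallP => x; apply/implyP => xr; apply/forallP => y.
apply/implyP => yr; apply/implyP => _; apply/negP => d.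
move: xr yr; rewrite !inE => /andP [_ px] /andP [Ty _].
have [l e hl] := desc_inv hF (ltn_ord x) d.
rewrite e in px; move/negP: px; apply.
have hl' := hF.1 _ _ (ltn_ord x) e.
case/orP: hl => [/eqP -> //|].
case/(descE hF _ hl') => j [_ ej]. exact: (@reach_closed F hF T j l (val y) hT hl' ej Ty).
Qed.

Lemma inL_roots (F : oforest) (hF : is_forest F) T i :
  closedP F T -> i < fsize F -> inL (roots F T) i = T i.
Proof.
move=> hT hi; apply/idP/idP.
  case/existsP => x /andP []; rewrite inE => /andP [Tx _] /orP [/eqP -> //|].
  by case/(descE hF _ hi) => j [_ ej]; exact: (@reach_closed F hF T j i (val x) hT hi ej Tx).
move=> Ti.
suff: forall k i, i < fsize F -> T i -> iter k (fstep F) (Some i) = None ->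
  inL (roots F T) i by move=> H; exact: (H _ _ hi Ti (noloop hF hi)).
elim=> [//|k IH] {Ti hi} i hi Ti; rewrite iterSr /=.
have iroot : i \in [seq val x | x in roots F T] -> inL (roots F T) i.
  by case/imageP => x xr ->; apply/existsP; exists x; rewrite xr eqxx.
case e: (fpar F i) => [l|] en.
  case Tl: (T l).
    have hl := hF.1 _ _ hi e.
    case/existsP: (IH l hl Tl en) => x /andP [xr h]; apply/existsP; exists x.
    by rewrite xr (step_desc hF hi e h) orbT.
  apply: iroot; apply/imageP; exists (Ordinal hi) => //.
  by rewrite inE /= Ti e Tl.
apply: iroot; apply/imageP; exists (Ordinal hi) => //.
by rewrite inE /= Ti e.
Qed.

Lemma roots_inL (F : oforest) (hF : is_forest F) (V : {set 'I_(fsize F)}) :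
  admissible V -> V = roots F (inL V).
Proof.
move=> adm; apply/setP => x; rewrite inE; apply/idP/idP.
  move=> xV; apply/andP; split.
    by apply/existsP; exists x; rewrite xV eqxx.
  case e: (fpar F x) => [l|] //; apply/negP => /existsP [y /andP [yV h]].
  have d := step_desc hF (ltn_ord x) e h.
  have [exy|nxy] := eqVneq x y.
    by move: (hF.2 _ (ltn_ord x)); rewrite {2}exy d.
  by move: adm => /forallP /(_ x) /implyP /(_ xV) /forallP /(_ y) /implyP /(_ yV)
    /implyP /(_ nxy); rewrite d.
case/andP => /existsP [y /andP [yV /orP [/eqP exy|d]]] pc.
  by rewrite (val_inj exy).
have [l e hl] := desc_inv hF (ltn_ord x) d.
rewrite e in pc; case/negP: pc; apply/existsP; exists y; by rewrite yV.
Qed.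

Lemma adm_uniq (F : oforest) (hF : is_forest F) (V V' : {set 'I_(fsize F)}) :
  admissible V -> admissible V' -> (forall i, i < fsize F -> inL V i = inL V' i) ->
  V = V'.
Proof.
move=> a a' h; rewrite (roots_inL hF a) (roots_inL hF a').
apply/setP => x; rewrite !inE h ?ltn_ord //.
case e: (fpar F x) => [l|] //; by rewrite h // (hF.1 _ _ (ltn_ord x) e).
Qed.


Lemma compat_restrict (F : oforest) (hF : is_forest F) (I : nat -> bool) (f : nat -> letter) :
  compatA (restrict F I) [seq f i | i <- iota 0 (fsize F) & I i] =
  all (fun k => validA (f k) && match fpar F k with
                 | None => diagA (f k)
                 | Some l => if I l then precA (f l) (f k) else diagA (f k) end)
      [seq i <- iota 0 (fsize F) | I i].
Proof.
rewrite /compatA /compat_gen /restrict /=.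
set s := [seq i <- iota 0 (fsize F) | I i].
rewrite size_map eqxx andTb all_map.
set cond := fun k => match fpar F k with
                 | None => diagA (f k)
                 | Some l => if I l then precA (f l) (f k) else diagA (f k) end.
have -> : forall a : bool, a && all (fun k => match
       match fpar F (nth 0 s k) with
       | Some u => if u \in s then Some (index u s) else None
       | None => None
       end
     with
     | Some l =>
         precA (nth (0, 0) [seq f i | i <- s] l)
           (nth (0, 0) [seq f i | i <- s] k)
     | None => diagA (nth (0, 0) [seq f i | i <- s] k)
     end) (iota 0 (size s)) = a && all cond s.
  move=> a; congr (_ && _).
  rewrite -[X in all cond X](mkseq_nth 0 s) /mkseq all_map.
  apply: eq_in_all => r; rewrite mem_iota /= add0n => hr.
  have ks : nth 0 s r \in s by exact: mem_nth.
  have := ks; rewrite mem_filter mem_iota /= add0n => /andP [Ik kn].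
  rewrite /cond (nth_map 0) //=.
  case e: (fpar F (nth 0 s r)) => [l|] //.
  have hl := hF.1 _ _ kn e.
  have -> : (l \in s) = I l by rewrite mem_filter mem_iota /= add0n hl andbT.
  case: ifP => // Il.
  have ls : l \in s by rewrite mem_filter mem_iota /= add0n hl andbT.
  by rewrite (nth_map 0) ?index_mem ?nth_index.
by rewrite -all_predI.
Qed.

Definition closedb (F : oforest) (T : nat -> bool) :=
  all (fun k => if fpar F k is Some l then T l ==> T k else true) (iota 0 (fsize F)).

Lemma closedbP (F : oforest) T : closedb F T <-> closedP F T.
Proof.
split.
  move=> /allP h k l hk e Tl; have := h k; rewrite mem_iota /= add0n e => /(_ hk).
  by rewrite Tl.
move=> h; apply/allP => k; rewrite mem_iota /= add0n => hk.
case e: (fpar F k) => [l|] //; apply/implyP; exact: h hk e.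
Qed.

Lemma proj_nth (w : seq letterAB) T f :
  (forall i, i < size w -> nth (false, (0, 0)) w i = (T i, f i)) ->
  projA w = [seq f i | i <- iota 0 (size w) & ~~ T i] /\
  projB w = [seq f i | i <- iota 0 (size w) & T i].
Proof.
move=> hw; rewrite /projA /projB.
have ew := esym (mkseq_nth (false, (0, 0)) w).
split; rewrite [in LHS]ew /mkseq filter_map -map_comp.
  rewrite (@eq_in_filter _ _ (fun i => ~~ T i)); last first.
    by move=> i; rewrite mem_iota /= add0n => /hw /= ->.
  apply/eq_in_map => i; rewrite mem_filter mem_iota /= add0n => /andP [_ /hw] /=.
  by move=> ->.
rewrite (@eq_in_filter _ _ (fun i => T i)); last first.
  by move=> i; rewrite mem_iota /= add0n => /hw /= ->.
apply/eq_in_map => i; rewrite mem_filter mem_iota /= add0n => /andP [_ /hw] /=.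
by move=> ->.
Qed.

Lemma compatAB_split (F : oforest) (hF : is_forest F) (w : seq letterAB) T f :
  size w = fsize F ->
  (forall i, i < size w -> nth (false, (0, 0)) w i = (T i, f i)) ->
  compatAB F w = [&& closedb F T, compatA (restrict F (fun i => ~~ T i)) (projA w)
                   & compatA (restrict F T) (projB w)].
Proof.
move=> sw hw; have [-> ->] := proj_nth hw; rewrite sw.
rewrite !compat_restrict // !all_filter /closedb.
rewrite /compatAB /compat_gen sw eqxx /=.
rewrite [X in all validAB X](esym (mkseq_nth (false, (0, 0)) w)) /mkseq all_map sw.
rewrite -!all_predI; apply: eq_in_all => k; rewrite mem_iota /= add0n => hk.
rewrite /= /validAB /diagAB /precAB hw ?sw //=.
case e: (fpar F k) => [l|].
  have hl := hF.1 _ _ hk e.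
  rewrite hw ?sw //=.
  by case: (T k); case: (T l); case: (validA (f k)); rewrite //= ?andbT ?andbF.
by case: (T k); case: (validA (f k)); rewrite //= ?andbT ?andbF.
Qed.


Lemma size_proj (w : seq letterAB) : size w = size (projA w) + size (projB w).
Proof.
rewrite /projA /projB !size_map !size_filter addnC.
by rewrite -(count_predC (fun x : letterAB => x.1)).
Qed.

Lemma fst_shuffle m u v :
  map fst (shuffle m u v) = take (size (shuffle m u v)) m.
Proof.
elim: m u v => [|b m IH] u v //=.
case: b.
  by case: v => [|y v] //=; rewrite IH.
by case: u => [|x u] //=; rewrite IH.
Qed.

Lemma proj_shuffle m u v :
  count (fun b => ~~ b) m = size u -> count id m = size v ->
  projA (shuffle m u v) = u /\ projB (shuffle m u v) = v.
Proof.
elim: m u v => [|b m IH] u v /=.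
  by case: u => // ; case: v.
case: b => /=.
  case: v => [|y v] //= hu [] hv; have [h1 h2] := IH _ _ hu hv.
  by rewrite /projA /projB /= in h1 h2 *; rewrite h1 h2.
case: u => [|x u] //= [] hu hv; have [h1 h2] := IH _ _ hu hv.
by rewrite /projA /projB /= in h1 h2 *; rewrite h1 h2.
Qed.

Lemma mem_cons_map (b c : bool) m (s : seq (seq bool)) :
  (b :: m \in map (cons c) s) = (b == c) && (m \in s).
Proof.
apply/mapP/andP => [[m' ms [-> ->]]|[/eqP -> ms]]; first by rewrite eqxx.
by exists m.
Qed.

Lemma mem_allmasks N m : (m \in allmasks N) = (size m == N).
Proof.
elim: N m => [|N IH] [|b m] //=.
  by rewrite mem_cat cats0; apply/negP => /orP [] /mapP [? _].
rewrite mem_cat cats0 !mem_cons_map !IH eqSS.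
by case: b; rewrite ?andbF ?orbF.
Qed.

Lemma uniq_allmasks N : uniq (allmasks N).
Proof.
elim: N => [|N IH] //=.
rewrite cats0 cat_uniq !map_inj_uniq ?IH //=; try by move=> ? ? [].
rewrite andbT; apply/hasPn => x /mapP [m _ ->]; by apply/negP => /mapP [m' _] [].
Qed.

Lemma sum_pick (T : eqType) (r : seq T) (P : pred T) a X :
  uniq r -> a \in r -> P a -> \sum_(m <- r | P m) (m == a) * X = X.
Proof.
move=> ur ar Pa; rewrite big_mkcond (bigD1_seq a) //= Pa eqxx mul1n big1 ?addn0 //.
by move=> i /negbTE ->; case: (P i).
Qed.


Lemma restrict_eq (F : oforest) (I J : nat -> bool) :
  (forall i, i < fsize F -> I i = J i) -> restrict F I = restrict F J.
Proof.
move=> h; rewrite /restrict (@eq_in_filter _ I J) //.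
by move=> i; rewrite mem_iota /= add0n => /h.
Qed.

Definition mV (F : oforest) (V : {set 'I_(fsize F)}) := [seq inL V i | i <- iota 0 (fsize F)].

Lemma star (F : oforest) (hF : is_forest F) u v m :
  m \in allmasks (size u + size v) ->
  (projA (shuffle m u v) == u) && (projB (shuffle m u v) == v) ->
  SAB F (shuffle m u v) =
  \sum_(V : {set 'I_(fsize F)} | admissible V) (m == mV V) * (SA (Roo V) u * SA (Lea V) v).
Proof.
move=> mN /andP [/eqP pa /eqP pb].
have sw : size (shuffle m u v) = size u + size v by rewrite size_proj pa pb.
have sm : size m = size u + size v by move: mN; rewrite mem_allmasks => /eqP.
have fw : map fst (shuffle m u v) = m by rewrite fst_shuffle sw -sm take_size.
set w := shuffle m u v in sw fw pa pb *.
pose T i := nth false m i. pose f i := (nth (false,(0,0)) w i).2.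
have hw : forall i, i < size w -> nth (false,(0,0)) w i = (T i, f i).
  move=> i hi; rewrite /T /f -fw (nth_map (false,(0,0))) //; by case: (nth _ w i).
have TV : forall V : {set 'I_(fsize F)}, m = mV V -> forall i, i < fsize F -> T i = inL V i.
  by move=> V e i hi; rewrite /T e (nth_map 0) ?size_iota // nth_iota.
have [en|ne] := eqVneq (size u + size v) (fsize F); last first.
  rewrite /SAB /compatAB /compat_gen sw (negbTE ne) big1 // => V _.
  have -> : (m == mV V) = false.
    by apply/negbTE; apply: contra ne => /eqP e; rewrite -sm e size_map size_iota.
  by [].
rewrite /SAB (@compatAB_split F hF w T f) //; last by rewrite sw en.
have -> : projA w = u by [].
have -> : projB w = v by [].
case cT: (closedb F T).
  have cP := (closedbP F T).1 cT.
  have a0 := adm_roots hF cP.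
  have iL := inL_roots hF cP.
  have mv0 : m = mV (roots F T).
    apply: (@eq_from_nth _ false); first by rewrite size_map size_iota sm.
    move=> i; rewrite sm en => hi.
    by rewrite (nth_map 0) ?size_iota // nth_iota // add0n iL.
  rewrite (bigD1 (roots F T)) //= -mv0 eqxx mul1n big1 ?addn0.
    rewrite /SA /Roo /Lea (@restrict_eq F (fun w => ~~ inL (roots F T) w) (fun i => ~~ T i)); last first.
      by move=> i hi; rewrite iL.
    rewrite (@restrict_eq F (inL (roots F T)) T); last by move=> i hi; rewrite iL.
    by rewrite mulnb.
  move=> V /andP [aV nV]; case e: (m == mV V) => //; exfalso.
  move/eqP: nV; apply; apply: (@adm_uniq F hF V _ aV a0) => i hi.
  by rewrite iL // (TV V (eqP e)).
rewrite big1 // => V aV; case e: (m == mV V) => //; exfalso.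
move: cT; rewrite (closedbP F T).2 //.
move=> k l hk ep; rewrite !(TV V (eqP e)) //; last exact: hF.1 _ _ hk ep.
exact: inL_closed hF V k l hk ep.
Qed.


Lemma part2 (F : oforest) (hF : is_forest F) (u v : seq letter) :
     imageAB F u v =
     \sum_(V : {set 'I_(fsize F)} | admissible V) SA (Roo V) u * SA (Lea V) v.
Proof.
rewrite /imageAB.
transitivity (\sum_(m <- allmasks (size u + size v) |
        (projA (shuffle m u v) == u) && (projB (shuffle m u v) == v))
      \sum_(V : {set 'I_(fsize F)} | admissible V)
         (m == mV V) * (SA (Roo V) u * SA (Lea V) v)).
  rewrite big_seq_cond [RHS]big_seq_cond; apply: eq_bigr => m /andP [mN Pm].
  exact: star.
rewrite exchange_big; apply: eq_bigr => V aV.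
rewrite /SA; case cu: (compatA (Roo V) u); last first.
  by rewrite /= mul0n big1 // => m _; rewrite /= muln0.
case cv: (compatA (Lea V) v); last first.
  by rewrite /= muln0 big1 // => m _; rewrite /= muln0.
rewrite /= muln1; apply: sum_pick; first exact: uniq_allmasks.
  move: cu cv => /and3P [/eqP su _ _] /and3P [/eqP sv _ _].
  rewrite mem_allmasks size_map size_iota su sv /= !size_filter addnC.
  have := count_predC (inL V) (iota 0 (fsize F)); rewrite size_iota => {1}<-.
  by apply/eqP.
move: cu cv => /and3P [/eqP su _ _] /and3P [/eqP sv _ _].
have h1 : count (fun b => ~~ b) (mV V) = size u by rewrite count_map su /= size_filter.
have h2 : count id (mV V) = size v by rewrite count_map sv /= size_filter.
by have [-> ->] := proj_shuffle h1 h2; rewrite !eqxx.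
Qed.


Theorem mainTheorem3 (F G : oforest) (hF : is_forest F) (hG : is_forest G) :
  (forall w : seq letter, prod_ser (SA F) (SA G) w = SA (fcat F G) w) /\
  (forall u v : seq letter,
     imageAB F u v =
     \sum_(V : {set 'I_(fsize F)} | admissible V) SA (Roo V) u * SA (Lea V) v).
Proof.
split=> [w|u v]; [exact: part1 | exact: part2].
Qed.
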